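(* Let $T\in\mathcal{B}(\mathcal{H})$ and let $T=A+iB$ be the Cartesian decomposition of $T$. Then for every $\theta\in\mathbb{R}$, \begin{equation*} \frac{1}{2}w(T)\leq w\left(\begin{bmatrix} 0 &A \\ e^{i\theta}B& 0 \end{bmatrix}\right)\leq w(T). \end{equation*}
   Context: $\mathcal{H}$ is a complex Hilbert space and $\mathcal{B}(\mathcal{H})$ is the $C^*$-algebra of all bounded linear operators on $\mathcal{H}$. For $T\in\mathcal{B}(\mathcal{H})$, $w(T)=\sup\{|\langle Tx,x\rangle|:\|x\|=1\}$ is the numerical radius. The Cartesian decomposition $T=A+iB$ has $A=\frac{T+T^*}{2}$ and $B=\frac{T-T^*}{2i}$ self-adjoint. A $2\times 2$ operator matrix with entries in $\mathcal{B}(\mathcal{H})$ is regarded as an operator on $\mathcal{H}\oplus\mathcal{H}$. *)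

(* Defs.v *)
From HB Require Import structures.
From mathcomp Require Import all_boot all_order all_algebra.
From mathcomp Require Import all_classical all_reals.
From mathcomp Require Import complex.
From mathcomp Require Import trigo.
Set Implicit Arguments. Unset Strict Implicit. Unset Printing Implicit Defensive.
Import Order.TTheory GRing.Theory Num.Theory.
Local Open Scope ring_scope.
Local Open Scope complex_scope.

Section Hilbert.
Variable R : realType.
Local Notation C := (R[i]).

Definition ipnorm (U : Type) (ip : U -> U -> C) (x : U) : R :=
  Num.sqrt (complex.Re (ip x x)).

Definition is_hilbert (V : lmodType C) (ip : V -> V -> C) : Prop :=
  [/\ (forall (a : C) (x y z : V), ip (a *: x + y) z = a * ip x z + ip y z),
      (forall x y : V, ip y x = (ip x y)^*),
      (forall x : V, 0 <= ip x x),
      (forall x : V, ip x x = 0 -> x = 0) &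
      (forall u : nat -> V,
         (forall e : R, 0 < e -> exists N : nat, forall m n : nat,
             (N <= m)%N -> (N <= n)%N -> ipnorm ip (u m - u n) < e) ->
         exists l : V, forall e : R, 0 < e -> exists N : nat, forall n : nat,
             (N <= n)%N -> ipnorm ip (u n - l) < e)].

Definition is_bounded_op (V : lmodType C) (ip : V -> V -> C) (T : V -> V) : Prop :=
  (forall (a : C) (x y : V), T (a *: x + y) = a *: T x + T y) /\
  (exists M : R, forall x : V, ipnorm ip (T x) <= M * ipnorm ip x).

Definition is_adjoint (V : lmodType C) (ip : V -> V -> C) (T Ts : V -> V) : Prop :=
  forall x y : V, ip (T x) y = ip x (Ts y).

Definition numrad (U : Type) (ip : U -> U -> C) (f : U -> U) : R :=
  sup [set ComplexField.Normc.normc (ip (f x) x) | x in [set x | ipnorm ip x = 1]].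

Definition re_part (V : lmodType C) (T Ts : V -> V) : V -> V :=
  fun x => (2%:R)^-1 *: (T x + Ts x).
Definition im_part (V : lmodType C) (T Ts : V -> V) : V -> V :=
  fun x => (2%:R * 'i)^-1 *: (T x - Ts x).

Definition ip_sum (V : lmodType C) (ip : V -> V -> C) : (V * V)%type -> (V * V)%type -> C :=
  fun x y => ip x.1 y.1 + ip x.2 y.2.

(* the 2x2 operator matrix [[P, Q], [S, U]] acting on H (+) H *)
Definition opmx2 (V : lmodType C) (P Q S U : V -> V) : (V * V)%type -> (V * V)%type :=
  fun x => (P x.1 + Q x.2, S x.1 + U x.2).

Definition expi (theta : R) : C := cos theta +i* sin theta.

End Hilbert.

(* Main.v *)
Require Import Defs.
From HB Require Import structures.
From mathcomp Require Import all_boot all_order all_algebra.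
From mathcomp Require Import all_classical all_reals.
From mathcomp Require Import complex.
From mathcomp Require Import trigo.
From mathcomp Require Import ring lra.
Set Implicit Arguments. Unset Strict Implicit.
Import Order.TTheory GRing.Theory Num.Theory.
Local Open Scope ring_scope.
Local Open Scope complex_scope.
Section S.
Variable R : realType.
Local Notation C := R[i].
Local Notation nc := (ComplexField.Normc.normc (R:=R)).
Local Notation Re := (@complex.Re R).
Local Notation Im := (@complex.Im R).

Lemma ReD (a b : C) : Re (a + b) = Re a + Re b. Proof. by case: a; case: b. Qed.
Lemma ImD (a b : C) : Im (a + b) = Im a + Im b. Proof. by case: a; case: b. Qed.
Lemma ReN (a : C) : Re (- a) = - Re a. Proof. by case: a. Qed.
Lemma ImN (a : C) : Im (- a) = - Im a. Proof. by case: a. Qed.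
Lemma ReJ (a : C) : Re (conjc a) = Re a. Proof. by case: a. Qed.
Lemma ImJ (a : C) : Im (conjc a) = - Im a. Proof. by case: a. Qed.
Lemma ReR (r : R) : Re (r%:C) = r. Proof. by []. Qed.
Lemma ReRM (r : R) (a : C) : Re (r%:C * a) = r * Re a.
Proof. by case: a => x y /=; rewrite !mul0r subr0. Qed.
Lemma conji : conjc ('i : C) = - 'i.
Proof. by apply/eqP; rewrite eq_complex /= oppr0 !eqxx. Qed.
Lemma i_neq0 : ('i : C) != 0.
Proof. by rewrite eq_complex /= oner_eq0 andbF. Qed.
Lemma two_neq0 : (2%:R : C) != 0.
Proof. by rewrite pnatr_eq0. Qed.
Lemma conjE (w : C) : conjc w = (complex.Re w)%:C - 'i * (complex.Im w)%:C.
Proof. case: w => a b; apply/eqP; rewrite eq_complex /=; apply/andP; split; apply/eqP; ring. Qed.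
Lemma nce (t : R) : ComplexField.Normc.normc (cos t +i* sin t) = 1.
Proof. by rewrite /= cos2Dsin2 sqrtr1. Qed.
Lemma nci : ComplexField.Normc.normc ('i : C) = 1.
Proof. by rewrite /= expr0n expr1n add0r sqrtr1. Qed.
Lemma cM (a b : C) : conjc (a * b) = conjc a * conjc b. Proof. exact: rmorphM. Qed.
Lemma cD (a b : C) : conjc (a + b) = conjc a + conjc b. Proof. exact: rmorphD. Qed.
Lemma cB (a b : C) : conjc (a - b) = conjc a - conjc b. Proof. exact: rmorphB. Qed.
Lemma cN (a : C) : conjc (- a) = - conjc a. Proof. exact: rmorphN. Qed.
Lemma cinv : conjc ((2%:R * 'i)^-1 : C) = - (2%:R * 'i)^-1.
Proof. rewrite fmorphV rmorphM rmorph_nat -invrN -mulrN; congr (_ * _)^-1; exact: conji. Qed.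
Lemma cinv2 : conjc ((2%:R)^-1 : C) = (2%:R)^-1.
Proof. by rewrite fmorphV rmorph_nat. Qed.
Lemma conjR (r : R) : conjc (r%:C) = r%:C :> C.
Proof. by rewrite /conjc /= oppr0. Qed.
Lemma nc_ge0 (a : C) : 0 <= nc a. Proof. by case: a => x y; rewrite /= sqrtr_ge0. Qed.
Lemma nc_Re (a : C) : Re a <= nc a.
Proof.
case: a => x y /=; apply: le_trans (ler_norm x) _.
rewrite -sqrtr_sqr; apply: ler_wsqrtr; rewrite lerDl; exact: sqr_ge0.
Qed.
Lemma nc_Im (a : C) : Im a <= nc a.
Proof.
case: a => x y /=; apply: le_trans (ler_norm y) _.
rewrite -sqrtr_sqr; apply: ler_wsqrtr; rewrite lerDr; exact: sqr_ge0.
Qed.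
Lemma ncN (a : C) : nc (- a) = nc a. Proof. by case: a => x y /=; rewrite !sqrrN. Qed.
Lemma ncJ (a : C) : nc (conjc a) = nc a. Proof. by case: a => x y /=; rewrite !sqrrN. Qed.
Lemma ncM (a b : C) : nc (a * b) = nc a * nc b. Proof. exact: ComplexField.Normc.normcM. Qed.
Lemma ncD (a b : C) : nc (a + b) <= nc a + nc b. Proof. exact: le_normcD. Qed.
Lemma ncR (r : R) : nc (r%:C) = `|r|.
Proof. by rewrite /= expr0n /= addr0 sqrtr_sqr. Qed.
Lemma nc_sqr (a : C) : a * conjc a = ((nc a) ^+ 2)%:C.
Proof.
have := sqr_normc a. by move=> <-; rewrite -rmorphXn.
Qed.
Lemma rot (z : C) : exists u : C, u * conjc u = 1 /\ u * z = (nc z)%:C.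
Proof.
have [->|z0] := eqVneq z 0.
  by exists 1; rewrite rmorph1 mulr1 mul1r; split => //; rewrite ComplexField.Normc.normc0.
exists ((nc z)%:C / z); split; last by rewrite mulfVK.
have n0 : nc z != 0 by apply: contra z0 => /eqP/ComplexField.Normc.eq0_normc ->.
rewrite nc_sqr ncM ComplexField.Normc.normcV ncR ger0_norm ?nc_ge0 // mulfV //.
by rewrite expr1n.
Qed.

End S.
Section Form.
Variable R : realType.
Local Notation C := R[i].
Local Notation nc := (ComplexField.Normc.normc (R:=R)).
Local Notation Re := (@complex.Re R).
Local Notation Im := (@complex.Im R).
Variables (V : lmodType C) (ip : V -> V -> C).
Hypothesis ipL : forall (a : C) (x y z : V), ip (a *: x + y) z = a * ip x z + ip y z.
Hypothesis ipC : forall x y : V, ip y x = conjc (ip x y).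

Lemma ip0l z : ip 0 z = 0.
Proof. have := ipL (-1) 0 0 z; rewrite scaler0 addr0 mulN1r => ->; by rewrite addNr. Qed.
Lemma ipDl x y z : ip (x + y) z = ip x z + ip y z.
Proof. by rewrite -[x]scale1r ipL mul1r scale1r. Qed.
Lemma ipZl a x z : ip (a *: x) z = a * ip x z.
Proof. by rewrite -[a *: x]addr0 ipL ip0l addr0. Qed.
Lemma ipNl x z : ip (- x) z = - ip x z.
Proof. by rewrite -scaleN1r ipZl mulN1r. Qed.
Lemma ipBl x y z : ip (x - y) z = ip x z - ip y z.
Proof. by rewrite ipDl ipNl. Qed.
Lemma ipDr x y z : ip z (x + y) = ip z x + ip z y.
Proof. by rewrite ipC ipDl rmorphD /= -!ipC. Qed.
Lemma ipZr a x z : ip z (a *: x) = conjc a * ip z x.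
Proof. by rewrite ipC ipZl rmorphM /= -!ipC. Qed.
Lemma ipNr x z : ip z (- x) = - ip z x.
Proof. by rewrite ipC ipNl rmorphN /= -!ipC. Qed.
Lemma ipBr x y z : ip z (x - y) = ip z x - ip z y.
Proof. by rewrite ipDr ipNr. Qed.
Lemma ip0r z : ip z 0 = 0.
Proof. by rewrite ipC ip0l rmorph0. Qed.

Lemma polar x y : Re (ip (x + y) (x + y)) - Re (ip (x - y) (x - y)) = 4 * Re (ip x y).
Proof.
rewrite ipDl ipBl !(ipDr, ipNr) [ip y x]ipC !(ReD, ReN, ReJ); lra.
Qed.
End Form.
Section Inner.
Variable R : realType.
Local Notation C := R[i].
Local Notation nc := (ComplexField.Normc.normc (R:=R)).
Local Notation Re := (@complex.Re R).
Local Notation Im := (@complex.Im R).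
Variables (V : lmodType C) (ip : V -> V -> C).
Hypothesis ipL : forall (a : C) (x y z : V), ip (a *: x + y) z = a * ip x z + ip y z.
Hypothesis ipC : forall x y : V, ip y x = conjc (ip x y).
Hypothesis ipP : forall x : V, 0 <= ip x x.
Hypothesis ipDef : forall x : V, ip x x = 0 -> x = 0.
Definition n2 x := Re (ip x x).
Lemma ipE x : ip x x = (n2 x)%:C.
Proof.
have h := ger0_Im (ipP x). rewrite /n2; case: (ip x x) h => a b /= -> //.
Qed.
Lemma n2_ge0 x : 0 <= n2 x.
Proof. by have := ipP x; rewrite ipE ler0c. Qed.
Lemma n2_eq0 x : n2 x = 0 -> x = 0.
Proof. by move=> h; apply: ipDef; rewrite ipE h. Qed.
Let ipZr_ := ipZr ipL ipC.
Let ipZl_ := ipZl ipL.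
Let ipDl_ := ipDl ipL.
Let ipDr_ := ipDr ipL ipC.
Let ipBl_ := ipBl ipL.
Let ipBr_ := ipBr ipL ipC.
Lemma ipZZ a x : ip (a *: x) (a *: x) = a * conjc a * ip x x.
Proof. by rewrite ipZl_ ipZr_ mulrA. Qed.
Lemma n2_unit u x : u * conjc u = 1 -> n2 (u *: x) = n2 x.
Proof. by move=> h; rewrite /n2 ipZZ h mul1r. Qed.
Lemma n2_real (r : R) x : n2 (r%:C *: x) = r ^+ 2 * n2 x.
Proof. by rewrite /n2 ipZZ conjR -rmorphM ReRM expr2. Qed.

Lemma n2D x y : n2 (x + y) = n2 x + n2 y + 2 * Re (ip x y).
Proof.
rewrite /n2 ipDl_ !ipDr_ !ReD [ip y x]ipC. rewrite (ReJ (ip x y)). lra.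
Qed.
Lemma n2B x y : n2 (x - y) = n2 x + n2 y - 2 * Re (ip x y).
Proof.
rewrite /n2 ipBl_ !ipBr_ [ip y x]ipC !(ReD, ReN, ReJ); lra.
Qed.

Lemma amgm x y : nc (ip x y) <= (n2 x + n2 y) / 2.
Proof.
have [u [hu e]] := rot (ip x y).
have h := n2_ge0 (u *: x - y).
rewrite n2B n2_unit // ipZl_ e ReR in h.
lra.
Qed.

Lemma herm_bound (h : V -> V -> C) (W : R) :
  (forall (a : C) (x y z : V), h (a *: x + y) z = a * h x z + h y z) ->
  (forall x y : V, h y x = conjc (h x y)) ->
  (forall z, Re (h z z) <= W * n2 z) -> (forall z, - Re (h z z) <= W * n2 z) ->
  forall x y, nc (h y x) <= W * (n2 x + n2 y) / 2.
Proof.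
move=> hL hC hu hl.
have key : forall x y, Re (h y x) <= W * (n2 x + n2 y) / 2.
  move=> x y; have := polar hL hC y x.
  have := hu (y + x); have := hl (y - x).
  rewrite n2B n2D; lra.
move=> x y.
have [v [hv e]] := rot (h y x).
have := key (conjc v *: x) y.
rewrite (ipZr hL hC) conjcK e ReR n2_unit //.
by rewrite conjcK mulrC.
Qed.
End Inner.

Local Open Scope classical_set_scope.
Section Main.
Variable R : realType.
Local Notation C := R[i].
Local Notation nc := (ComplexField.Normc.normc (R:=R)).
Local Notation Re := (@complex.Re R).
Local Notation Im := (@complex.Im R).
Variables (V : lmodType C) (ip : V -> V -> C) (T Ts : V -> V) (theta : R).
Hypothesis ipL : forall (a : C) (x y z : V), ip (a *: x + y) z = a * ip x z + ip y z.
Hypothesis ipC : forall x y : V, ip y x = conjc (ip x y).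
Hypothesis ipP : forall x : V, 0 <= ip x x.
Hypothesis ipDef : forall x : V, ip x x = 0 -> x = 0.
Hypothesis TL : forall (a : C) (x y : V), T (a *: x + y) = a *: T x + T y.
Hypothesis TB : exists Mb : R, forall x : V, ipnorm ip (T x) <= Mb * ipnorm ip x.
Hypothesis adj : forall x y : V, ip (T x) y = ip x (Ts y).

Local Notation N2 := (n2 ip).

Lemma sqrt1E (a : R) : 0 <= a -> (Num.sqrt a = 1 <-> a = 1).
Proof.
move=> a0; split=> [h|->]; last exact: sqrtr1.
by rewrite -(sqr_sqrtr a0) h expr1n.
Qed.

Lemma unitE x : ipnorm ip x = 1 <-> N2 x = 1.
Proof. exact: (sqrt1E (n2_ge0 ipP x)). Qed.

Let g y x := ip (T y) x.
Let hA y x := 2%:R^-1 * (g y x + conjc (g x y)).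
Let hB y x := (2%:R * 'i)^-1 * (g y x - conjc (g x y)).

Lemma T0 : T 0 = 0.
Proof.
have h := TL 1 0 0; rewrite scaler0 addr0 scale1r in h.
have : T 0 + T 0 - T 0 = T 0 - T 0 by rewrite -h.
by rewrite addrK subrr.
Qed.

Lemma gL a x y z : g (a *: x + y) z = a * g x z + g y z.
Proof. by rewrite /g TL ipL. Qed.
Lemma gR a x y z : g z (a *: x + y) = conjc a * g z x + g z y.
Proof. by rewrite /g (ipDr ipL ipC) (ipZr ipL ipC). Qed.

Lemma hA_L a x y z : hA (a *: x + y) z = a * hA x z + hA y z.
Proof. rewrite /hA gL gR cD cM conjcK; ring. Qed.
Lemma hA_C x y : hA y x = conjc (hA x y).
Proof. rewrite /hA cM cinv2 cD conjcK; ring. Qed.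
Lemma hB_L a x y z : hB (a *: x + y) z = a * hB x z + hB y z.
Proof. rewrite /hB gL gR cD cM conjcK; ring. Qed.
Lemma hB_C x y : hB y x = conjc (hB x y).
Proof.
rewrite /hB cM cinv cB conjcK; ring.
Qed.

Lemma ipA y x : ip (re_part T Ts y) x = hA y x.
Proof. by rewrite /re_part (ipZl ipL) (ipDl ipL) [ip (Ts y) x]ipC -adj. Qed.
Lemma ipB y x : ip (im_part T Ts y) x = hB y x.
Proof. by rewrite /im_part (ipZl ipL) (ipBl ipL) [ip (Ts y) x]ipC -adj. Qed.

Lemma hAzz z : hA z z = (Re (g z z))%:C.
Proof. by rewrite /hA addcJ mulrA mulVf ?two_neq0 // mul1r. Qed.
Lemma hBzz z : hB z z = (Im (g z z))%:C.
Proof.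
rewrite /hB subcJ [2 * _ * _]mulrAC mulKf // mulf_neq0 ?i_neq0 ?two_neq0 //.
Qed.


Let Tset := [set nc (ip (T x) x) | x in [set x | ipnorm ip x = 1]].
Let W := sup Tset.

Lemma Tub : has_ubound Tset.
Proof.
have [Mb hMb] := TB.
exists ((Mb ^+ 2 + 1) / 2) => r [x /= hx <-].
have n1 : N2 x = 1 by apply/unitE.
have h := hMb x; rewrite hx mulr1 in h.
have s0 : 0 <= ipnorm ip (T x) := sqrtr_ge0 _.
have e : N2 (T x) = ipnorm ip (T x) ^+ 2 by rewrite sqr_sqrtr // n2_ge0.
have := amgm ipL ipC ipP (T x) x; rewrite e n1.
nra.
Qed.

Lemma inT x : N2 x = 1 -> nc (g x x) <= W.
Proof. move=> h; apply: (ub_le_sup Tub); exists x => //=; exact/unitE. Qed.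

Lemma Wge0 : 0 <= W.
Proof.
have [[r Tr]|n] := pselect (Tset !=set0).
  apply: le_trans (ub_le_sup Tub Tr); by case: Tr => x _ <-; exact: nc_ge0.
rewrite /W; have -> : Tset = set0 by apply/seteqP; split => // r Tr; apply: n; exists r.
by rewrite sup0.
Qed.

Lemma gbound z : nc (g z z) <= W * N2 z.
Proof.
have [z0|zp] := eqVneq (N2 z) 0.
  rewrite z0 mulr0 (n2_eq0 ipP ipDef z0) /g (ip0r ipL ipC) ComplexField.Normc.normc0 //.
have n0 := n2_ge0 ipP z.
have zp' : 0 < N2 z by rewrite lt_neqAle eq_sym zp n0.
set s := Num.sqrt (N2 z).
have sp : 0 < s by rewrite sqrtr_gt0.
have ss : s ^+ 2 = N2 z by rewrite sqr_sqrtr.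
set x := (s^-1)%:C *: z.
have Ux : N2 x = 1 by rewrite /x (n2_real ipL ipC) exprVn ss mulVf.
have Tx : T x = (s^-1)%:C *: T z by rewrite /x -[_ *: z]addr0 TL T0 addr0.
have gx : g x x = (s^-1 * s^-1)%:C * g z z.
  by rewrite /g Tx (ipZl ipL) /x (ipZr ipL ipC) conjR mulrA -rmorphM.
have := inT Ux; rewrite gx ncM ncR ger0_norm; last by rewrite mulr_ge0 // invr_ge0 ltW.
move=> h.
rewrite -ss.
have -> : nc (g z z) = (s^-1 * s^-1 * nc (g z z)) * s ^+ 2.
  by field; rewrite gt_eqF.
apply: ler_wpM2r => //; exact: sqr_ge0.
Qed.

Lemma hAb x y : nc (hA y x) <= W * (N2 x + N2 y) / 2.
Proof.
apply: (herm_bound ipL ipC hA_L hA_C) => z; rewrite hAzz ReR; apply: le_trans (gbound z).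
  exact: nc_Re.
rewrite -ncN -ReN; exact: nc_Re.
Qed.

Lemma hBb x y : nc (hB y x) <= W * (N2 x + N2 y) / 2.
Proof.
apply: (herm_bound ipL ipC hB_L hB_C) => z; rewrite hBzz ReR; apply: le_trans (gbound z).
  exact: nc_Im.
rewrite -ncN -ImN; exact: nc_Im.
Qed.

Let e := expi theta.
Let M := opmx2 (fun _ => 0) (re_part T Ts) (fun x => e *: im_part T Ts x) (fun _ => 0).

Lemma Mform y : ip_sum ip (M y) y = hA y.2 y.1 + e * hB y.1 y.2.
Proof. by rewrite /ip_sum /M /opmx2 /= add0r addr0 ipA (ipZl ipL) ipB. Qed.

Lemma unit2 y : ipnorm (ip_sum ip) y = 1 <-> N2 y.1 + N2 y.2 = 1.
Proof.
have h := sqrt1E (addr_ge0 (n2_ge0 ipP y.1) (n2_ge0 ipP y.2)).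
rewrite /ipnorm /ip_sum ReD; exact: h.
Qed.

Let Mset := [set nc (ip_sum ip (M y) y) | y in [set y | ipnorm (ip_sum ip) y = 1]].

Lemma inMle r : Mset r -> r <= W.
Proof.
case=> y /= /unit2 hy <-.
rewrite Mform; apply: le_trans (ncD _ _) _.
rewrite ncM /e /expi nce mul1r.
have := hAb y.1 y.2; have := hBb y.2 y.1.
rewrite [N2 y.2 + _]addrC hy.
lra.
Qed.

Lemma Mub : has_ubound Mset.
Proof. by exists W => r; apply: inMle. Qed.

Lemma part2 : sup Mset <= W.
Proof.
have [ne|n] := pselect (Mset !=set0).
  by apply: ge_sup ne _ => r; apply: inMle.
have -> : Mset = set0 by apply/seteqP; split => // r Tr; apply: n; exists r.
by rewrite sup0 Wge0.
Qed.

Lemma supM0 : 0 <= sup Mset.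
Proof.
have [[r Tr]|n] := pselect (Mset !=set0).
  apply: le_trans (ub_le_sup Mub Tr); by case: Tr => x _ <-; exact: nc_ge0.
have -> : Mset = set0 by apply/seteqP; split => // r Tr; apply: n; exists r.
by rewrite sup0.
Qed.

Lemma lowpt x : N2 x = 1 -> nc (g x x) / 2 <= sup Mset.
Proof.
move=> Ux.
set c := sqrtc ('i * e).
have hc2 : c ^+ 2 = 'i * e := sqr_sqrtc _.
have nc1 : nc c = 1.
  have h : nc c * nc c = 1 by rewrite -ncM -expr2 hc2 ncM nci /e /expi nce mul1r.
  have := nc_ge0 c; nra.
have hcc : c * conjc c = 1 by rewrite nc_sqr nc1 expr1n.
have ee : e = - 'i * c ^+ 2 by rewrite hc2 mulrA mulNr -expr2 sqr_i opprK mul1r.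
have ecc : e * conjc c = - 'i * c.
  by rewrite {1}ee expr2 -mulrA -mulrA hcc mulr1.
set s := Num.sqrt (2^-1 : R).
have hs : s ^+ 2 = 2^-1 by rewrite sqr_sqrtr // invr_ge0 ler0n.
set y := ((s%:C) *: x, (s%:C * c) *: x).
have Uy : N2 y.1 + N2 y.2 = 1.
  rewrite /= -scalerA !(n2_real ipL ipC) (n2_unit ipL ipC) // Ux hs; lra.
have key : ip_sum ip (M y) y = (s ^+ 2)%:C * (c * conjc (g x x)).
  rewrite Mform /= (ipZl hA_L) (ipZr hA_L hA_C) (ipZl hB_L) (ipZr hB_L hB_C) hAzz hBzz cM !conjR (conjE (g x x)).
  rewrite rmorphXn.
  transitivity (s%:C ^+ 2 * (c * (Re (g x x))%:C + (e * conjc c) * (Im (g x x))%:C)); first by ring.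
  rewrite ecc; ring.
have My : Mset (nc (ip_sum ip (M y) y)) by exists y => //=; apply/unit2.
have := ub_le_sup Mub My.
rewrite key ncM ncR ger0_norm ?sqr_ge0 // hs ncM nc1 ncJ mul1r => h.
by rewrite mulrC.
Qed.

Lemma part1 : 2%:R^-1 * W <= sup Mset.
Proof.
have [ne|n] := pselect (Tset !=set0).
  have : W <= 2 * sup Mset.
    apply: ge_sup ne _ => r [x /= /unitE Ux <-].
    have := lowpt Ux; rewrite /g; lra.
  lra.
have -> : W = 0.
  rewrite /W; have -> : Tset = set0 by apply/seteqP; split => // r Tr; apply: n; exists r.
  exact: sup0.
by rewrite mulr0 supM0.
Qed.

Lemma mainlem : 2%:R^-1 * numrad ip T <= numrad (ip_sum ip) M /\
  numrad (ip_sum ip) M <= numrad ip T.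
Proof. split; [exact: part1 | exact: part2]. Qed.

End Main.

Unset Implicit Arguments.
Unset Strict Implicit.
Local Close Scope classical_set_scope.

Theorem corollary4p9 (R : realType) (V : lmodType R[i]) (ip : V -> V -> R[i])
    (T Ts : V -> V) (theta : R) :
  is_hilbert ip -> is_bounded_op ip T -> is_adjoint ip T Ts ->
  let A := re_part T Ts in
  let B := im_part T Ts in
  let M := opmx2 (fun _ => 0) A (fun x => expi theta *: B x) (fun _ => 0) in
  2%:R^-1 * numrad ip T <= numrad (ip_sum ip) M /\
  numrad (ip_sum ip) M <= numrad ip T.
Proof.
move=> [ipL ipC ipP ipDef _] [TL TB] adj A B M.
exact: (mainlem theta ipL ipC ipP ipDef TL TB adj).
Qed.
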